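(* Let $I$ be an interval in $\mathcal{R}$ with endpoints $a<b$, and let $X\subseteq I$ be dense in $I$ (with respect to the order topology). Then every cover $(S_n)$ of $X$ satisfies $\sum_{n=1}^\infty l(S_n)\ge l(I)$; consequently $X$ is outer measurable and $M_u(X)=l(I)=b-a$.
   Context: $\mathcal{R}$ denotes the Levi-Civita field: functions $x:\mathbb{Q}\to\mathbb{R}$ with left-finite support, with componentwise addition and formal power series multiplication, ordered by $x>0$ iff $x\ne0$ and $x[\min\operatorname{supp}x]>0$; it is a non-Archimedean ordered field extension of $\mathbb{R}$, Cauchy complete in the order topology, in which all limits and series are taken (a series $\sum a_n$ converges iff $a_n\to0$). An interval is a set $[a,b],[a,b),(a,b]$ or $(a,b)$ with $a<b$ in $\mathcal{R}$, of length $l=b-a$. A cover of $A\subseteq\mathcal{R}$ is a sequence of intervals $(S_n)_{n\ge1}$ with $A\subseteq\bigcup_n S_n$ and $\sum_n l(S_n)$ convergent in $\mathcal{R}$. $A$ is called outer measurable if the infimum $\inf\{\sum_n l(S_n): (S_n)\text{ a cover of }A\}$ exists in $\mathcal{R}$; this infimum is then called the outer measure $M_u(A)$. *)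

(* Defs.v *)
(* the Levi-Civita field modelled as functions rat -> R
   (R : realType, i.e. the real numbers) with left-finite support. *)
From mathcomp Require Import all_boot all_order all_algebra.
From mathcomp Require Import boolp classical_sets cardinality reals.
Set Implicit Arguments. Unset Strict Implicit. Unset Printing Implicit Defensive.
Import Order.TTheory GRing.Theory Num.Theory.
Local Open Scope classical_set_scope.
Local Open Scope ring_scope.

Section LeviCivita.
Variable R : realType.

Definition left_finite (x : rat -> R) : Prop :=
  forall r : rat, finite_set [set q : rat | q < r /\ x q != 0].
Definition LC : set (rat -> R) := [set x | left_finite x].

Definition lc_add (x y : rat -> R) : rat -> R := fun q => x q + y q.
Definition lc_opp (x : rat -> R) : rat -> R := fun q => - x q.
Definition lc_sub (x y : rat -> R) : rat -> R := lc_add x (lc_opp y).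

Definition lc_pos (x : rat -> R) : Prop :=
  exists q : rat, 0 < x q /\ forall p : rat, p < q -> x p = 0.
Definition lc_lt (x y : rat -> R) : Prop := lc_pos (lc_sub y x).
Definition lc_le (x y : rat -> R) : Prop := x = y \/ lc_lt x y.

Definition lc_open (U : set (rat -> R)) : Prop :=
  forall p, LC p -> U p -> exists c d, [/\ LC c, LC d, lc_lt c p, lc_lt p d &
    forall y, LC y -> lc_lt c y -> lc_lt y d -> U y].

Definition lc_cvg (s : nat -> rat -> R) (L : rat -> R) : Prop :=
  LC L /\ forall c d, LC c -> LC d -> lc_lt c L -> lc_lt L d ->
    exists N : nat, forall n, (N <= n)%N -> lc_lt c (s n) /\ lc_lt (s n) d.

Definition lc_psum (u : nat -> rat -> R) (n : nat) : rat -> R :=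
  fun q => \sum_(k < n) u k q.
Definition lc_series_to (u : nat -> rat -> R) (L : rat -> R) : Prop :=
  lc_cvg (lc_psum u) L.

Record lc_interval := Itv { ia : rat -> R; ib : rat -> R;
                         iclosedl : bool; iclosedr : bool }.
Definition is_interval (I : lc_interval) : Prop :=
  [/\ LC (ia I), LC (ib I) & lc_lt (ia I) (ib I)].
Definition in_itv (I : lc_interval) (p : rat -> R) : Prop :=
  [/\ LC p,
      (if iclosedl I then lc_le (ia I) p else lc_lt (ia I) p) &
      (if iclosedr I then lc_le p (ib I) else lc_lt p (ib I))].
Definition itv_length (I : lc_interval) : rat -> R := lc_sub (ib I) (ia I).

Definition lc_dense_in (X : set (rat -> R)) (I : lc_interval) : Prop :=
  (forall x, X x -> in_itv I x) /\
  forall U, lc_open U -> (exists p, in_itv I p /\ U p) -> exists p, X p /\ U p.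

Definition is_cover (A : set (rat -> R)) (S : nat -> lc_interval) : Prop :=
  [/\ forall n, is_interval (S n),
      forall x, A x -> exists n, in_itv (S n) x &
      exists L, lc_series_to (fun n => itv_length (S n)) L].

Definition cover_sums (A : set (rat -> R)) : set (rat -> R) :=
  [set L | exists S, is_cover A S /\ lc_series_to (fun n => itv_length (S n)) L].

Definition lc_is_inf (B : set (rat -> R)) (m : rat -> R) : Prop :=
  [/\ LC m, forall y, B y -> lc_le m y &
      forall m', LC m' -> (forall y, B y -> lc_le m' y) -> lc_le m' m].

Definition outer_measurable (A : set (rat -> R)) : Prop :=
  exists m, lc_is_inf (cover_sums A) m.
Definition outer_measure_is (A : set (rat -> R)) (m : rat -> R) : Prop :=
  lc_is_inf (cover_sums A) m.

End LeviCivita.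

(* Main.v *)
Require Import Defs.
From mathcomp Require Import all_boot all_order all_algebra.
From mathcomp Require Import boolp classical_sets cardinality reals.
From mathcomp Require Import finmap ring lra.
From mathcomp Require Import ereal measure lebesgue_measure.
Set Implicit Arguments. Unset Strict Implicit. Unset Printing Implicit Defensive.
Import Order.TTheory GRing.Theory Num.Theory.
Local Open Scope classical_set_scope.
Local Open Scope ring_scope.



Section Core.
Variable R : realType.
Implicit Types x y z : rat -> R.

Definition nn x := (forall q, x q = 0) \/ lc_pos x.

Lemma pos_ext x y : (forall q, x q = y q) -> lc_pos x -> lc_pos y.
Proof. by move=> e [q [xq xp]]; exists q; rewrite -e; split=> // p /xp; rewrite -e. Qed.

Lemma pos_add x y : lc_pos x -> lc_pos y -> lc_pos (fun q => x q + y q).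
Proof.
move=> [q1 [x1 xp]] [q2 [y2 yp]].
case: (ltgtP q1 q2) => [h|h|e]; last subst q2.
- exists q1; split; first by rewrite (yp _ h) addr0.
  by move=> p hp; rewrite xp // yp ?addr0 // (lt_trans hp h).
- exists q2; split; first by rewrite (xp _ h) add0r.
  by move=> p hp; rewrite yp // xp ?addr0 // (lt_trans hp h).
- exists q1; split; first by rewrite addr_gt0.
  by move=> p hp; rewrite xp // yp ?addr0.
Qed.

Lemma pos0F x : (forall q, x q = 0) -> lc_pos x -> False.
Proof. by move=> e [q [xq _]]; move: xq; rewrite e ltxx. Qed.

Lemma nn_ext x y : (forall q, x q = y q) -> nn x -> nn y.
Proof.
move=> e [h|h]; first by left=> q; rewrite -e.
by right; apply: pos_ext h.
Qed.

Lemma nn_add x y : nn x -> nn y -> nn (fun q => x q + y q).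
Proof.
move=> [h1|h1] [h2|h2].
- by left=> q; rewrite h1 h2 addr0.
- by right; apply: pos_ext h2 => q; rewrite h1 add0r.
- by right; apply: pos_ext h1 => q; rewrite h2 addr0.
- by right; apply: pos_add.
Qed.

Lemma pos_nn_add x y : lc_pos x -> nn y -> lc_pos (fun q => x q + y q).
Proof.
move=> h1 [h2|h2]; last by apply: pos_add.
by apply: pos_ext h1 => q; rewrite h2 addr0.
Qed.

Lemma pos_nn x : lc_pos x -> nn x. Proof. by right. Qed.
Lemma nn0 x : (forall q, x q = 0) -> nn x. Proof. by left. Qed.

Lemma pos_scale c x : 0 < c -> lc_pos x -> lc_pos (fun q => c * x q).
Proof.
move=> c0 [q [xq xp]]; exists q; split; first by rewrite mulr_gt0.
by move=> p /xp ->; rewrite mulr0.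
Qed.

Lemma nn_scale c x : 0 <= c -> nn x -> nn (fun q => c * x q).
Proof.
rewrite le_eqVlt => /orP[/eqP<-|c0] h; first by left=> q; rewrite mul0r.
case: h => h; first by left=> q; rewrite h mulr0.
by right; apply: pos_scale.
Qed.

Lemma nn_lead x q : nn x -> (forall p, p < q -> x p = 0) -> x q < 0 -> False.
Proof.
move=> [h|[q' [xq' xp]]] hb xq; first by move: xq; rewrite h ltxx.
case: (ltgtP q' q) => [h|h|e].
- by move: xq'; rewrite hb // ltxx.
- by move: xq; rewrite xp // ltxx.
- by move: xq; rewrite -e; rewrite ltNge (ltW xq').
Qed.

Lemma pos_lead x q : (forall p, p < q -> x p = 0) -> 0 < x q -> lc_pos x.
Proof. by move=> h1 h2; exists q. Qed.

Lemma seq_has_min (s : seq rat) (x : rat) : x \in s ->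
  exists2 m, m \in s & forall p, p \in s -> m <= p.
Proof.
elim: s x => // a s IH x; rewrite inE => /orP[_|xs].
  case: (boolP (has (fun p => p < a) s)) => [/hasP[b bs ba]|].
    have [m ms mp] := IH _ bs; exists m; first by rewrite inE ms orbT.
    move=> p; rewrite inE => /orP[/eqP->|/mp //]; exact/ltW/(le_lt_trans (mp _ bs)).
  move/hasPn => h; exists a; first by rewrite inE eqxx.
  by move=> p; rewrite inE => /orP[/eqP->//|/h]; rewrite -leNgt.
have [m ms mp] := IH _ xs.
case: (leP m a) => ma.
  by exists m; [rewrite inE ms orbT| move=> p; rewrite inE => /orP[/eqP->|/mp]].
exists a; first by rewrite inE eqxx.
by move=> p; rewrite inE => /orP[/eqP->//|/mp]; apply: le_trans; apply: ltW.
Qed.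

Lemma LC_min x q0 : LC x -> x q0 != 0 ->
  exists q, x q != 0 /\ forall p, p < q -> x p = 0.
Proof.
move=> lx xq0.
pose A := [set q : rat | q < q0 + 1 /\ x q != 0].
have fA : finite_set A := lx (q0 + 1).
pose s : seq rat := fset_set A.
have sP q : (q \in s) = `[< A q >].
  by rewrite /s -[q \in _]/(q \in fset_set A) in_fset_set // inE.
have q0s : q0 \in s.
  by rewrite sP; apply/asboolP; split=> //; rewrite ltrDl.
have [m ms mp] := seq_has_min q0s.
move: (ms); rewrite sP => /asboolP [m1 m2].
exists m; split=> // p pm; apply/eqP; apply/negP => /negP xp.
have : p \in s by rewrite sP; apply/asboolP; split=> //; apply: lt_trans m1.
by move/mp; rewrite leNgt pm.
Qed.
End Core.



Section P2.
Variable R : realType.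
Implicit Types x y z : rat -> R.

Lemma LC_supp x y : LC x -> (forall q, y q != 0 -> x q != 0) -> LC y.
Proof.
move=> lx h r; apply: (sub_finite_set _ (lx r)) => q [qr yq]; split=> //; exact: h.
Qed.

Lemma LC_supp2 x y z : LC x -> LC y ->
  (forall q, z q != 0 -> x q != 0 \/ y q != 0) -> LC z.
Proof.
move=> lx ly h r.
have fU : finite_set ([set q | q < r /\ x q != 0] `|` [set q | q < r /\ y q != 0]).
  by rewrite finite_setU; split; [exact: (lx r)|exact: (ly r)].
apply: (sub_finite_set _ fU) => q [qr zq].
by case: (h q zq) => ?; [left|right].
Qed.

Lemma LC_add x y : LC x -> LC y -> LC (fun q => x q + y q).
Proof.
move=> lx ly; apply: (LC_supp2 lx ly) => q.
case: (eqVneq (x q) 0) => [->|]; last by left.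
by rewrite add0r; right.
Qed.

Lemma LC_scale c x : LC x -> LC (fun q => c * x q).
Proof. by move=> lx; apply: (LC_supp lx) => q; apply: contra => /eqP->; rewrite mulr0. Qed.

Lemma LC_sub x y : LC x -> LC y -> LC (fun q => x q - y q).
Proof.
move=> lx ly; have := LC_add lx (LC_scale (-1) ly).
by move=> h; apply: (LC_supp h) => q; rewrite mulN1r.
Qed.

Lemma LC_opp x : LC x -> LC (fun q => - x q).
Proof. by move=> lx; have h := LC_scale (-1) lx; apply: (LC_supp h) => q; rewrite mulN1r. Qed.

Definition mono (k : rat) (c : R) : rat -> R := fun q => if q == k then c else 0.

Lemma LC_mono k c : LC (mono k c).
Proof.
move=> r; apply: (sub_finite_set _ (finite_set1 k)) => q [_ h]; move: h; rewrite /mono.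
by case: (eqVneq q k) => [-> _ //|_]; rewrite eqxx.
Qed.

Lemma LC_zero : LC (fun _ => 0 : R).
Proof. by move=> r; apply: (sub_finite_set _ (finite_set0 _)) => q [_]; rewrite eqxx. Qed.

Lemma mono_pos k c : 0 < c -> lc_pos (mono k c).
Proof.
move=> c0; exists k; rewrite /mono eqxx; split=> // p pk.
by rewrite lt_eqF.
Qed.

Lemma tricho x : LC x ->
  (forall q, x q = 0) \/ lc_pos x \/ lc_pos (fun q => - x q).
Proof.
move=> lx; case: (pselect (exists q, x q != 0)) => [[q0 xq0]|h]; last first.
  by left=> q; apply/eqP; apply: contra_notT h => ?; exists q.
have [q [xq xp]] := LC_min lx xq0.
right; case: (ltgtP (x q) 0) => h.
- by right; exists q; split; [rewrite oppr_gt0|move=> p /xp ->; rewrite oppr0].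
- by left; exists q.
- by move: xq; rewrite h eqxx.
Qed.

Lemma nn_total x : LC x -> nn x \/ lc_pos (fun q => - x q).
Proof. by move=> /tricho[h|[h|h]]; [left; left|left; right|right]. Qed.

Lemma le_nn x y : lc_le x y -> nn (fun q => y q - x q).
Proof. by case=> [->|h]; [left=> q; rewrite subrr|right]. Qed.

Lemma nn_le x y : nn (fun q => y q - x q) -> lc_le x y.
Proof.
case=> [h|h]; [left|right=> //].
by apply: funext => q; apply/eqP; rewrite eq_sym -subr_eq0 h.
Qed.

Lemma lt_pos x y : lc_lt x y -> lc_pos (fun q => y q - x q).
Proof. by []. Qed.
Lemma pos_lt x y : lc_pos (fun q => y q - x q) -> lc_lt x y.
Proof. by []. Qed.

Lemma cmp2 x y : LC x -> LC y -> nn (fun q => y q - x q) \/ lc_pos (fun q => x q - y q).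
Proof.
move=> lx ly; case: (nn_total (LC_sub ly lx)) => h; [by left|right].
by apply: pos_ext h => q; rewrite opprB.
Qed.

Definition lmax x y := if `[< lc_lt x y >] then y else x.
Definition lmin x y := if `[< lc_lt x y >] then x else y.

Lemma lmaxP x y : LC x -> LC y ->
  (lmax x y = y /\ lc_pos (fun q => y q - x q)) \/
  (lmax x y = x /\ nn (fun q => x q - y q)).
Proof.
move=> lx ly; rewrite /lmax; case: (asboolP (lc_lt x y)) => h; first by left.
right; split=> //; case: (cmp2 ly lx) => // h'; exfalso; exact: h.
Qed.

Lemma lminP x y : LC x -> LC y ->
  (lmin x y = x /\ lc_pos (fun q => y q - x q)) \/
  (lmin x y = y /\ nn (fun q => x q - y q)).
Proof.
move=> lx ly; rewrite /lmin; case: (asboolP (lc_lt x y)) => h; first by left.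
right; split=> //; case: (cmp2 ly lx) => // h'; exfalso; exact: h.
Qed.

Lemma LC_lmax x y : LC x -> LC y -> LC (lmax x y).
Proof. by move=> lx ly; rewrite /lmax; case: asboolP. Qed.
Lemma LC_lmin x y : LC x -> LC y -> LC (lmin x y).
Proof. by move=> lx ly; rewrite /lmin; case: asboolP. Qed.

End P2.
Arguments LC_zero {R}.



Fixpoint allp {T} (P : T -> Prop) (s : seq T) : Prop :=
  if s is a :: s' then P a /\ allp P s' else True.

Lemma allp_map {T U} (P : U -> Prop) (f : T -> U) s :
  allp P (map f s) <-> allp (fun a => P (f a)) s.
Proof. by elim: s => //= a s ->. Qed.

Lemma allp_impl2 {T} (P Q W : T -> Prop) s :
  (forall a, P a -> Q a -> W a) -> allp P s -> allp Q s -> allp W s.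
Proof.
move=> h; elim: s => //= a s IH [pa ps] [qa qs]; split; [exact: h|exact: IH].
Qed.

Ltac pw3 := let q := fresh "q" in move=> q /=; ring.

Section P3.
Variable R : realType.
Implicit Types x y z : rat -> R.
Notation pair := ((rat -> R) * (rat -> R))%type.

Definition lam (p : pair) : rat -> R := lmax (fun q => p.2 q - p.1 q) (fun _ => 0).
Fixpoint lsum (s : seq pair) : rat -> R :=
  if s is p :: s' then fun q => lam p q + lsum s' q else fun _ => 0.
Definition LCp (p : pair) := LC p.1 /\ LC p.2.

Lemma lamP p : LCp p ->
  (nn (fun q => p.2 q - p.1 q) /\ forall q, lam p q = p.2 q - p.1 q) \/
  (lc_pos (fun q => p.1 q - p.2 q) /\ forall q, lam p q = 0).
Proof.
move=> [l1 l2]; rewrite /lam.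
case: (lmaxP (LC_sub l2 l1) LC_zero) => [[-> h]|[-> h]].
  by right; split=> //; apply: pos_ext h => q /=; ring.
by left; split=> //; apply: nn_ext h => q /=; ring.
Qed.

Lemma lam_nn p : LCp p -> nn (lam p).
Proof.
move=> /lamP [[h e]|[h e]]; last by left.
by apply: nn_ext h => q; rewrite e.
Qed.

Lemma lam_ge p : LCp p -> nn (fun q => lam p q - (p.2 q - p.1 q)).
Proof.
move=> /lamP [[h e]|[h e]]; first by left=> q; rewrite e subrr.
by apply: nn_ext (pos_nn h) => q; rewrite e; ring.
Qed.

Lemma LC_lam p : LCp p -> LC (lam p).
Proof. by move=> [l1 l2]; apply: LC_lmax; [exact: LC_sub|exact: LC_zero]. Qed.

Lemma LC_lsum s : allp LCp s -> LC (lsum s).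
Proof.
elim: s => [_|p s IH [hp hs]] /=; first exact: LC_zero.
by apply: LC_add; [exact: LC_lam|exact: IH].
Qed.

Lemma lsum_nn s : allp LCp s -> nn (lsum s).
Proof.
elim: s => [_|p s IH [hp hs]] /=; first by left.
exact: nn_add (lam_nn hp) (IH hs).
Qed.

Lemma clip p1 p2 s t : LC p1 -> LC p2 -> LC s -> LC t -> nn (fun q => t q - s q) ->
  nn (fun q => lam (p1, p2) q - lam (p1, lmin p2 s) q - lam (lmax p1 t, p2) q).
Proof.
move=> l1 l2 ls lt ts.
have lA : LCp (p1, lmin p2 s) by split=> //; exact: LC_lmin.
have lB : LCp (lmax p1 t, p2) by split=> //; exact: LC_lmax.
have mA : nn (fun q => p2 q - lmin p2 s q) /\ nn (fun q => s q - lmin p2 s q).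
  case: (lminP l2 ls) => [[-> h]|[-> h]]; split; try (by left=> q; rewrite subrr).
    exact: pos_nn. done.
have mB : nn (fun q => lmax p1 t q - p1 q) /\ nn (fun q => lmax p1 t q - t q).
  case: (lmaxP l1 lt) => [[-> h]|[-> h]]; split; try (by left=> q; rewrite subrr).
    exact: pos_nn. done.
case: mA mB => [mA1 mA2] [mB1 mB2].
case: (lamP (p:=(p1,p2)) (conj l1 l2)) => /= [[h e]|[h e]];
case: (lamP lA) => /= [[hA eA]|[hA eA]];
case: (lamP lB) => /= [[hB eB]|[hB eB]].
- apply: nn_ext (nn_add (nn_add ts mA2) mB2) => q /=; rewrite e eA eB; ring.
- apply: nn_ext mA1 => q /=; rewrite e eA eB; ring.
- apply: nn_ext mB1 => q /=; rewrite e eA eB; ring.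
- by apply: nn_ext h => q /=; rewrite e eA eB; ring.
- exfalso; apply: (pos0F _ (pos_nn_add (pos_nn_add h mB1) hB)) => q /=; ring.
- exfalso; apply: (pos0F _ (pos_nn_add (pos_nn_add h mA1) hA)) => q /=; ring.
- exfalso; apply: (pos0F _ (pos_nn_add (pos_nn_add h mB1) hB)) => q /=; ring.
- by left=> q; rewrite e eA eB; ring.
Qed.

Lemma clip_sum (r : seq pair) s t : LC s -> LC t -> nn (fun q => t q - s q) ->
  allp LCp r ->
  nn (fun q => lsum r q - lsum (map (fun p => (p.1, lmin p.2 s)) r) q
               - lsum (map (fun p => (lmax p.1 t, p.2)) r) q).
Proof.
move=> ls lt ts; elim: r => [_|[p1 p2] r IH [[l1 l2] hr]] /=; first by left=> q; ring.
apply: nn_ext (nn_add (clip l1 l2 ls lt ts) (IH hr)) => q /=; ring.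
Qed.

End P3.



Section P4.
Variable R : realType.
Implicit Types x y z : rat -> R.
Notation pair := ((rat -> R) * (rat -> R))%type.

Definition gap_concl (s : seq pair) lo hi g :=
  exists y z (c : R), [/\ LC y, LC z, nn (fun q => y q - lo q), nn (fun q => hi q - z q)
     & lc_pos (fun q => z q - y q)] /\ 0 < c /\
     nn (fun q => c * (z q - y q) - g q) /\
     allp (fun p : pair => forall x, lc_pos (fun q => x q - y q) -> lc_pos (fun q => z q - x q) ->
        nn (fun q => x q - p.1 q) -> nn (fun q => p.2 q - x q) -> False) s.

Lemma gap_n n : forall (s : seq pair), size s = n -> forall lo hi g, LC lo -> LC hi -> allp (@LCp R) s ->
  lc_pos g -> nn (fun q => hi q - lo q - g q - lsum s q) -> gap_concl s lo hi g.
Proof.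
elim: n => [|n IH] [|[u v] r] //= hsz lo hi g llo lhi hs gpos hsum; last case: hsz => hsz.
  exists lo, hi, 1; split; last split; last split; [split| exact: ltr01 | | done].
  + done.
  + done.
  + by left=> q; rewrite subrr.
  + by left=> q; rewrite subrr.
  + by apply: pos_ext (pos_nn_add gpos hsum) => q /=; ring.
  + by apply: nn_ext hsum => q /=; ring.
case: hs => [[/= lu lv] hr].
have hlo : nn (fun q => hi q - lo q).
  apply: nn_ext (nn_add (nn_add hsum (pos_nn gpos)) (lsum_nn (s:=(u,v)::r) (conj (conj lu lv) hr))) => q /=; ring.
have skip : lc_pos (fun q => u q - v q) \/ lc_pos (fun q => lo q - v q) \/
            lc_pos (fun q => u q - hi q) -> gap_concl ((u, v) :: r) lo hi g.
  move=> H.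
  have hs' : nn (fun q => hi q - lo q - g q - lsum r q).
    apply: nn_ext (nn_add hsum (lam_nn (p:=(u,v)) (conj lu lv))) => q /=; ring.
  have [y [z [c [[ly lz ylo zhi zy] [c0 [cg hall]]]]]] := IH r hsz lo hi g llo lhi hr gpos hs'.
  exists y, z, c; split=> //; split=> //; split=> //; split=> //= x xy zx xu vx.
  case: H => [H|[H|H]].
  - apply: (pos0F _ (pos_nn_add (pos_nn_add H xu) vx)) => q /=; ring.
  - apply: (pos0F _ (pos_nn_add (pos_nn_add (pos_nn_add xy vx) ylo) (pos_nn H))) => q /=; ring.
  - apply: (pos0F _ (pos_nn_add (pos_nn_add (pos_nn_add zx xu) zhi) (pos_nn H))) => q /=; ring.
case: (cmp2 lu lv) => [vu|H]; last by apply: skip; left.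
case: (cmp2 llo lv) => [vlo|H]; last by apply: skip; right; left.
case: (cmp2 lu lhi) => [hiu|H]; last by apply: skip; right; right.
have ls : LC (lmax u lo) := LC_lmax lu llo.
have lt : LC (lmin v hi) := LC_lmin lv lhi.
have [sl [su [hs DA]]] : nn (fun q => lmax u lo q - lo q) /\ nn (fun q => lmax u lo q - u q) /\
   nn (fun q => hi q - lmax u lo q) /\
   (forall x, lc_pos (fun q => lmax u lo q - x q) -> nn (fun q => x q - u q) ->
      lc_pos (fun q => x q - lo q) -> False).
  case: (lmaxP lu llo) => [[-> h]|[-> h]].
    split; first by left=> q; rewrite subrr.
    split; first exact: pos_nn.
    split=> // x h1 _ h2; apply: (pos0F _ (pos_add h1 h2)) => q /=; ring.
  split=> //; split; first by left=> q; rewrite subrr.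
  split=> // x h1 h2 _; apply: (pos0F _ (pos_nn_add h1 h2)) => q /=; ring.
have [th [tv [tl DB]]] : nn (fun q => hi q - lmin v hi q) /\ nn (fun q => v q - lmin v hi q) /\
   nn (fun q => lmin v hi q - lo q) /\
   (forall x, lc_pos (fun q => x q - lmin v hi q) -> nn (fun q => v q - x q) ->
      lc_pos (fun q => hi q - x q) -> False).
  case: (lminP lv lhi) => [[-> h]|[-> h]].
    split; first exact: pos_nn.
    split; first by left=> q; rewrite subrr.
    split=> // x h1 h2 _; apply: (pos0F _ (pos_nn_add h1 h2)) => q /=; ring.
  split; first by left=> q; rewrite subrr.
  split=> //; split=> // x h1 _ h2; apply: (pos0F _ (pos_add h1 h2)) => q /=; ring.
have ts : nn (fun q => lmin v hi q - lmax u lo q).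
  by case: (lmaxP lu llo) => [[-> _]|[-> _]]; case: (lminP lv lhi) => [[-> _]|[-> _]].
pose rA := map (fun p : pair => (p.1, lmin p.2 (lmax u lo))) r.
pose rB := map (fun p : pair => (lmax p.1 (lmin v hi), p.2)) r.
have hrA : allp (@LCp R) rA.
  rewrite allp_map; apply: (allp_impl2 _ hr hr) => p [l1 l2] _; split=> //; exact: LC_lmin.
have hrB : allp (@LCp R) rB.
  rewrite allp_map; apply: (allp_impl2 _ hr hr) => p [l1 l2] _; split=> //; exact: LC_lmax.
pose gA := fun q => lmax u lo q - lo q - lsum rA q.
pose gB := fun q => hi q - lmin v hi q - lsum rB q.
have lgA : LC gA by apply: LC_sub; [exact: LC_sub|exact: LC_lsum].
have lgB : LC gB by apply: LC_sub; [exact: LC_sub|exact: LC_lsum].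
have key : nn (fun q => gA q + gB q - g q).
  have cs := clip_sum ls lt ts hr.
  have lg := lam_ge (p:=(u,v)) (conj lu lv).
  apply: nn_ext (nn_add (nn_add (nn_add (nn_add hsum lg) tv) su) cs) => q.
  rewrite /gA /gB /rA /rB /=; ring.
case: (cmp2 lgB lgA) => [hAB|hBA].
  have gApos : lc_pos gA.
    apply: (pos_ext _ (pos_scale (c:=2^-1) _ (pos_nn_add (pos_nn_add gpos key) hAB))).
      by move=> q /=; lra.
    by rewrite invr_gt0 ltr0n.
  have e0 : nn (fun q => lmax u lo q - lo q - gA q - lsum rA q).
    by left=> q; rewrite /gA; ring.
  have [y [z [c [[ly lz ylo zs zy] [c0 [cg hall]]]]]] :=
    IH rA (etrans (size_map _ _) hsz) lo (lmax u lo) gA llo ls hrA gApos e0.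
  exists y, z, (2 * c); split; last split; last split.
  + split=> //; apply: nn_ext (nn_add zs hs) => q /=; ring.
  + by rewrite mulr_gt0.
  + apply: nn_ext (nn_add (nn_scale (c:=2) _ cg) (nn_add key hAB)) => [q /=|]; first ring.
    by rewrite ler0n.
  + split=> [x xy zx xu vx|].
      apply: (DA x _ xu); first by apply: pos_ext (pos_nn_add zx zs) => q /=; ring.
      apply: pos_ext (pos_nn_add xy ylo) => q /=; ring.
    move: hall; rewrite allp_map => hall; apply: (allp_impl2 _ hr hall).
    move=> p [l1 l2] hp x xy zx xp px; apply: (hp x xy zx xp) => /=.
    case: (lminP l2 ls) => [[-> _]|[-> _]] //.
    apply: pos_nn; apply: pos_ext (pos_nn_add zx zs) => q /=; ring.
have hBA' := pos_nn hBA.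
have gBpos : lc_pos gB.
  apply: (pos_ext _ (pos_scale (c:=2^-1) _ (pos_nn_add (pos_nn_add gpos key) hBA'))).
    by move=> q /=; lra.
  by rewrite invr_gt0 ltr0n.
have e0 : nn (fun q => hi q - lmin v hi q - gB q - lsum rB q).
  by left=> q; rewrite /gB; ring.
have [y [z [c [[ly lz yt zhi zy] [c0 [cg hall]]]]]] :=
  IH rB (etrans (size_map _ _) hsz) (lmin v hi) hi gB lt lhi hrB gBpos e0.
exists y, z, (2 * c); split; last split; last split.
+ split=> //; apply: nn_ext (nn_add yt tl) => q /=; ring.
+ by rewrite mulr_gt0.
+ apply: nn_ext (nn_add (nn_scale (c:=2) _ cg) (nn_add key hBA')) => [q /=|]; first ring.
  by rewrite ler0n.
+ split=> [x xy zx xu vx|].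
    apply: (DB x _ vx); first by apply: pos_ext (pos_nn_add xy yt) => q /=; ring.
    apply: pos_ext (pos_nn_add zx zhi) => q /=; ring.
  move: hall; rewrite allp_map => hall; apply: (allp_impl2 _ hr hall).
  move=> p [l1 l2] hp x xy zx xp px; apply: (hp x xy zx _ px) => /=.
  case: (lmaxP l1 lt) => [[-> _]|[-> _]] //.
  apply: pos_nn; apply: pos_ext (pos_nn_add xy yt) => q /=; ring.
Qed.

Lemma gap (s : seq pair) lo hi g : LC lo -> LC hi -> allp (@LCp R) s ->
  lc_pos g -> nn (fun q => hi q - lo q - g q - lsum s q) -> gap_concl s lo hi g.
Proof. exact: (gap_n (erefl (size s))). Qed.

End P4.



Ltac pw5 := let q := fresh "q" in move=> q; rewrite /lc_sub /lc_add /lc_opp /=; ring.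

Section P5.
Variable R : realType.
Implicit Types x y z : rat -> R.
Implicit Types u : nat -> rat -> R.

Lemma psumS u n q : lc_psum u n.+1 q = lc_psum u n q + u n q.
Proof. by rewrite /lc_psum big_ord_recr. Qed.
Lemma psum0 u q : lc_psum u 0 q = 0.
Proof. by rewrite /lc_psum big_ord0. Qed.

Lemma LC_psum u n : (forall k, LC (u k)) -> LC (lc_psum u n).
Proof.
move=> hu; elim: n => [|n IH].
  by apply: (LC_supp (LC_zero (R:=R))) => q; rewrite psum0 eqxx.
by have h := LC_add IH (hu n); apply: (LC_supp h) => q; rewrite psumS.
Qed.

Lemma psum_mono u n m : (forall k, nn (u k)) -> (n <= m)%N ->
  nn (fun q => lc_psum u m q - lc_psum u n q).
Proof.
move=> hu; elim: m => [|m IH]; first by rewrite leqn0 => /eqP->; left=> q; rewrite subrr.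
rewrite leq_eqVlt => /orP[/eqP->|]; first by left=> q; rewrite subrr.
rewrite ltnS => /IH h; apply: nn_ext (nn_add h (hu m)) => q; rewrite psumS; ring.
Qed.

Lemma cvg_LC (s : nat -> rat -> R) (L : rat -> R) : lc_cvg s L -> LC L.
Proof. by case. Qed.

Lemma series_small u L m : lc_series_to u L -> (forall k, LC (u k)) ->
  exists N0, forall n, (N0 <= n)%N -> lc_pos (fun q => mono m 1 q - u n q).
Proof.
move=> [lL hc] hu.
have e0 : lc_pos (mono m (2^-1 : R)) by apply: mono_pos; rewrite invr_gt0 ltr0n.
have lc := LC_sub lL (LC_mono m (2^-1 : R)).
have ld := LC_add lL (LC_mono m (2^-1 : R)).
have [||N0 hN] := hc _ _ lc ld.
- by apply: pos_ext e0; pw5.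
- by apply: pos_ext e0; pw5.
exists N0 => n nN.
have [h1 _] := hN n nN.
have [_ h2] := hN n.+1 (leqW nN).
apply: pos_ext (pos_add h1 h2) => q; rewrite /lc_sub /lc_add /lc_opp /= psumS /mono.
case: (q == m); lra.
Qed.

Lemma psum_le_lim u L N : lc_series_to u L -> (forall k, LC (u k)) ->
  (forall k, nn (u k)) -> nn (fun q => L q - lc_psum u N q).
Proof.
move=> [lL hc] hu hn.
case: (cmp2 (LC_psum N hu) lL) => // h; exfalso.
have lc := LC_sub lL (LC_mono 0 (1 : R)).
have [||N1 hN] := hc _ (lc_psum u N) lc (LC_psum N hu).
- by apply: pos_ext (mono_pos 0 ltr01); pw5.
- exact: h.
have [_ h2] := hN (maxn N1 N) (leq_maxl _ _).
have h3 := psum_mono hn (leq_maxr N1 N).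
apply: (pos0F _ (pos_nn_add h2 h3)) ; pw5.
Qed.

Lemma lsum_cat (s1 s2 : seq ((rat -> R) * (rat -> R))) q :
  lsum (s1 ++ s2) q = lsum s1 q + lsum s2 q.
Proof. by elim: s1 => [|p s IH] /=; [rewrite add0r|rewrite IH addrA]. Qed.

Lemma lsum_cover (S : nat -> lc_interval R) N q :
  (forall n, is_interval (S n)) ->
  lsum (map (fun n => (ia (S n), ib (S n))) (iota 0 N)) q =
  lc_psum (fun n => itv_length (S n)) N q.
Proof.
move=> hS; elim: N => [|N IH]; first by rewrite psum0.
rewrite -addn1 iotaD map_cat lsum_cat IH addn1 psumS /= add0n.
have [la lb ab] := hS N.
case: (lamP (p:=(ia (S N), ib (S N))) (conj la lb)) => /= [[_ ->]|[h _]].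
  by rewrite addr0.
by exfalso; apply: (pos0F _ (pos_add h ab)) ; pw5.
Qed.

Lemma allp_iota {T} (f : nat -> T) (P : T -> Prop) a N :
  allp P (map f (iota a N)) -> forall n, (a <= n)%N -> (n < a + N)%N -> P (f n).
Proof.
elim: N a => [|N IH] a /=; first by move=> _ n an; rewrite addn0 => nN; have := leq_trans nN an; rewrite ltnn.
move=> [h1 h2] n; rewrite leq_eqVlt => /orP[/eqP<-//|an] nN.
by apply: (IH a.+1 h2) => //; rewrite addSnnS.
Qed.


End P5.



Ltac pw6 := let q := fresh "q" in move=> q; rewrite /itv_length /lc_sub /lc_add /lc_opp /=; ring.

Lemma real_itv_uncountable (R : realType) (rho : R) (f : R -> nat) :
  0 < rho -> {in [set x : R | 0 < x < rho] &, injective f} -> False.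
Proof.
move=> rho0 finj.
have cA : countable [set` `]0, rho[%R].
  apply/countable_injP; exists f => x y xA yA; apply: finj; rewrite in_setE /=;
  by move: xA yA; rewrite !in_setE /= !in_itv /=.
have := countable_lebesgue_measure0 cA.
rewrite lebesgue_measure_itv /=.
by rewrite lte_fin rho0 oppr0 adde0 => -[] /eqP; rewrite gt_eqF.
Qed.

Section P6.
Variable R : realType.
Implicit Types x y z : rat -> R.

Lemma allp_all {T} (P : T -> Prop) s : (forall a, P a) -> allp P s.
Proof. by move=> h; elim: s => //= a s ->; split. Qed.

Lemma in_itv_nn (J : lc_interval R) x : Defs.in_itv J x ->
  nn (fun q => x q - ia J q) /\ nn (fun q => ib J q - x q).
Proof.
case=> _ h1 h2; split.
  by move: h1; case: (iclosedl J) => h; [exact: le_nn|exact: pos_nn h].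
by move: h2; case: (iclosedr J) => h; [exact: le_nn|exact: pos_nn h].
Qed.

Lemma mono_lt k (c : R) p : p < k -> mono k c p = 0.
Proof. by move=> pk; rewrite /mono lt_eqF. Qed.
Lemma mono_eq k (c : R) : mono k c k = c.
Proof. by rewrite /mono eqxx. Qed.
Lemma mono_neq k (c : R) p : p != k -> mono k c p = 0.
Proof. by move=> pk; rewrite /mono (negbTE pk). Qed.

Lemma part1 (I : lc_interval R) (X : set (rat -> R)) :
  is_interval I -> lc_dense_in X I ->
  forall (S : nat -> lc_interval R) (L : rat -> R),
      is_cover X S -> lc_series_to (fun n => itv_length (S n)) L ->
      lc_le (itv_length I) L.
Proof.
move=> [la lb ab] [Xin Xd] S L [Sint Scov _] hser.
have lu : forall n, LC (itv_length (S n)).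
  by move=> n; case: (Sint n) => l1 l2 _; exact: LC_sub.
have un : forall n, lc_pos (itv_length (S n)) by move=> n; case: (Sint n).
have lL : LC L by case: hser.
apply: nn_le.
case: (cmp2 (LC_sub lb la) lL) => // hg; exfalso.
pose g := fun q => ib I q - ia I q - L q.
have [k [gk gb]] := hg.
have [N0 hN0] := series_small (k + 1) hser lu.
have hle := psum_le_lim N0 hser lu (fun n => pos_nn (un n)).
pose s := map (fun n => (ia (S n), ib (S n))) (iota 0 N0).
have hs : allp (@LCp R) s.
  by rewrite allp_map; apply: allp_all => n; case: (Sint n).
have hsum : nn (fun q => ib I q - ia I q - g q - lsum s q).
  by apply: nn_ext hle => q; rewrite /s lsum_cover // /g; ring.
have [y [z [c [[ly lz ya bz zy] [c0 [cg hall]]]]]] := gap la lb hs hg hsum.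
have [j [wj wb]] := zy.
have jk : j <= k.
  case: (leP j k) => // kj; exfalso; apply: (nn_lead cg (q:=k)).
    move=> p pk /=; have e2 := wb p (lt_trans pk kj); have e1 := gb p pk.
    move: e1 e2 => /= e1 e2; rewrite e2 mulr0; lra.
  have e2 := wb k kj; move: e2 gk => /= e2 gk; rewrite e2 mulr0; lra.
have kk1 : (k == k + 1) = false by rewrite lt_eqF // ltrDl ltr01.
have kk1' : k < k + 1 by rewrite ltrDl ltr01.
pose rho := if j == k then z k - y k else 1.
have rho0 : 0 < rho by rewrite /rho; case: (eqVneq j k) => [<-|_]; [exact: wj|exact: ltr01].
have P1 : forall r : R, 0 < r -> lc_pos (fun q => mono k r q - mono (k + 1) 1 q).
  move=> r r0; apply: (@pos_lead _ _ k) => [p pk|].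
    by rewrite !mono_lt ?subr0 // (lt_trans pk kk1').
  by rewrite mono_eq mono_neq ?subr0 // kk1.
have P2 : forall r : R, 0 < r < rho -> lc_pos (fun q => z q - y q - mono k r q - mono (k + 1) 1 q).
  move=> r /andP[r0 rr]; apply: (@pos_lead _ _ j) => [p pj|].
    have pk : p < k := lt_le_trans pj jk.
    have := wb p pj => /= ->; rewrite !mono_lt ?(lt_trans pk kk1') //; ring.
  have jk1 : j != k + 1 by rewrite lt_eqF // (le_lt_trans jk kk1').
  rewrite (mono_neq _ jk1) subr0.
  case: (eqVneq j k) => [ejk|njk].
    subst j; rewrite mono_eq; move: rr; rewrite /rho eqxx => rr; lra.
  by rewrite (mono_neq _ njk) subr0.
have P3 : forall r r' : R, r < r' ->
    lc_pos (fun q => mono k r' q - mono k r q - 3 * mono (k + 1) 1 q).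
  move=> r r' rr; apply: (@pos_lead _ _ k) => [p pk|].
    by rewrite !mono_lt ?(lt_trans pk kk1') //; ring.
  by rewrite !mono_eq mono_neq ?kk1 //; lra.
have ep : lc_pos (mono (k + 1) (1 : R)) := mono_pos (k + 1) ltr01.
have hW : forall r : R, exists n, (0 < r < rho) -> exists x, [/\ X x,
    lc_lt (fun q => y q + mono k r q - mono (k + 1) 1 q) x,
    lc_lt x (fun q => y q + mono k r q + mono (k + 1) 1 q) & Defs.in_itv (S n) x].
  move=> r; case: (boolP (0 < r < rho)) => [hr|_]; last by exists 0%N.
  have /andP[r0 rr] := hr.
  pose W := [set x | LC x /\ lc_lt (fun q => y q + mono k r q - mono (k + 1) 1 q) x /\
                     lc_lt x (fun q => y q + mono k r q + mono (k + 1) 1 q)].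
  have lcr : LC (fun q => y q + mono k r q) := LC_add ly (LC_mono k r).
  have lm : LC (fun q => y q + mono k r q - mono (k + 1) 1 q) := LC_sub lcr (LC_mono _ _).
  have lp : LC (fun q => y q + mono k r q + mono (k + 1) 1 q) := LC_add lcr (LC_mono _ _).
  have Wo : lc_open W.
    move=> p _ [lp' [h1 h2]].
    exists (fun q => y q + mono k r q - mono (k + 1) 1 q),
           (fun q => y q + mono k r q + mono (k + 1) 1 q); split => //.
  have hin : exists p, Defs.in_itv I p /\ W p.
    exists (fun q => y q + mono k r q); split.
      have h1 : lc_lt (ia I) (fun q => y q + mono k r q).
        by apply: pos_ext (pos_nn_add (mono_pos k r0) ya); pw6.
      have h2 : lc_lt (fun q => y q + mono k r q) (ib I).
        by apply: pos_ext (pos_nn_add (pos_add (P2 r hr) ep) bz); pw6.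
      by split=> //; [case: (iclosedl I); [right|]|case: (iclosedr I); [right|]].
    by split=> //; split; apply: pos_ext ep; pw6.
  have [x [Xx [lx [h1 h2]]]] := Xd W Wo hin.
  have [n hn] := Scov x Xx.
  by exists n => _; exists x; split.
have [f hf] := boolp.choice hW.
have big : forall r : R, 0 < r < rho -> forall x n,
    lc_lt (fun q => y q + mono k r q - mono (k + 1) 1 q) x ->
    lc_lt x (fun q => y q + mono k r q + mono (k + 1) 1 q) ->
    Defs.in_itv (S n) x -> (N0 <= n)%N.
  move=> r hr x n hx1 hx2 hn; rewrite leqNgt; apply/negP => nN.
  have /andP[r0 _] := hr.
  have := allp_iota hall (n:=n) (leq0n n); rewrite add0n => /(_ nN) /(_ x).
  have [a1 b1] := in_itv_nn hn.
  apply=> //.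
    by apply: pos_ext (pos_add hx1 (P1 r r0)); pw6.
  by apply: pos_ext (pos_add hx2 (P2 r hr)); pw6.
have key : forall r r' : R, 0 < r < rho -> 0 < r' < rho -> r < r' -> f r = f r' -> False.
  move=> r r' hr hr' rr' e.
  have [x [Xx x1 x2 xn]] := hf r hr.
  have [x' [Xx' x'1 x'2 x'n]] := hf r' hr'.
  rewrite -e in x'n.
  have Nn := big r hr x (f r) x1 x2 xn.
  have sm := hN0 (f r) Nn.
  have [a1 _] := in_itv_nn xn.
  have [_ b2] := in_itv_nn x'n.
  apply: (pos0F _ (pos_nn_add (pos_nn_add (pos_add (pos_add (pos_add sm x'1) x2) (P3 r r' rr')) a1) b2)).
  pw6.
apply: (real_itv_uncountable (f:=f) rho0) => r1 r2; rewrite !in_setE /= => h1 h2 e12.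
case: (ltgtP r1 r2) => // [lt12|lt21]; exfalso.
  exact: key h1 h2 lt12 e12.
exact: key h2 h1 lt21 (esym e12).
Qed.

End P6.



Ltac pw7 := let q := fresh "q" in move=> q; rewrite /itv_length /lc_sub /lc_add /lc_opp /=; ring.

Ltac pw07 := rewrite /itv_length /lc_sub /lc_add /lc_opp /=; ring.

Section P7.
Variable R : realType.
Implicit Types x y z : rat -> R.

Lemma mono_diff_pos (e1 e2 : rat) : e1 < e2 ->
  lc_pos (fun q => mono e1 (1 : R) q - mono e2 1 q).
Proof.
move=> e12; apply: (@pos_lead _ _ e1) => [p pe|].
  by rewrite !mono_lt ?subr0 // (lt_trans pe e12).
by rewrite mono_eq mono_neq ?subr0 ?ltr01 // lt_eqF.
Qed.

Lemma mono_small (w e : rat) x : w < e -> (forall p, p < w -> x p = 0) -> 0 < x w ->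
  lc_pos (fun q => x q - mono e (1 : R) q).
Proof.
move=> we xb xw; apply: (@pos_lead _ _ w) => [p pw7|].
  by rewrite xb // mono_lt ?subr0 // (lt_trans pw7 we).
by rewrite mono_lt // subr0.
Qed.

Lemma part2 (I : lc_interval R) (X : set (rat -> R)) :
  is_interval I -> lc_dense_in X I ->
  outer_measure_is X (itv_length I).
Proof.
move=> hI hX; have [la lb ab] := hI; have [Xin Xd] := hX.
have ll : LC (itv_length I) by exact: LC_sub.
split=> //.
  by move=> L [S [hc hs]]; exact: part1 hI hX S L hc hs.
move=> m lm hm; apply: nn_le.
case: (cmp2 lm ll) => // hd; exfalso.
have [v [dv db]] := hd.
pose t := fun n : nat => mono (v + n%:R) (1 : R).
pose S := fun n : nat => if n is n'.+1 then
   Itv (ia I) (fun q => ia I q + t n'.+1 q - t n'.+2 q) true true else I.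
have tdp : forall n, lc_pos (fun q => t n q - t n.+1 q).
  move=> n; apply: mono_diff_pos; rewrite ltrD2l ltr_nat //.
have Sint : forall n, is_interval (S n).
  case=> [//|n]; split=> //=.
    by apply: LC_sub; [apply: LC_add => //|]; apply: LC_mono.
  by apply: pos_ext (tdp n.+1); pw7.
pose Lim := fun q => itv_length I q + t 1%N q.
have lLim : LC Lim by apply: LC_add => //; apply: LC_mono.
have psE : forall n, lc_psum (fun n => itv_length (S n)) n.+1 =1
    (fun q => Lim q - t n.+1 q).
  elim=> [|n IH] q; first by rewrite psumS psum0 /Lim; pw07.
  by rewrite psumS IH /Lim; pw07.
have hser : lc_series_to (fun n => itv_length (S n)) Lim.
  split=> // c d lc ld hc hd'.
  have [w [cw cb]] := hc.
  pose N := (Num.bound `|w - v|).+1.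
  exists N => n nN.
  have n0 : (0 < n)%N by apply: leq_trans nN.
  have -> : n = n.-1.+1 by rewrite prednK.
  have wv : w < v + (n.-1.+1)%:R.
    have h1 := archi_boundP (normr_ge0 (w - v)).
    have h2 : ((Num.bound `|w - v|)%:R : rat) <= (n.-1.+1)%:R.
      by rewrite ler_nat prednK // ltnW.
    have h3 : w - v <= `|w - v| := ler_norm _.
    move: h1 h2 h3; set B := (Num.bound _)%:R; set NN := (n.-1.+1)%:R => h1 h2 h3.
    lra.
  split.
    apply: (pos_ext _ (mono_small (x:= fun q => Lim q - c q) wv cb cw)) => q /=.
    by rewrite /lc_sub /lc_add /lc_opp /= psE /t; ring.
  apply: pos_ext (pos_add hd' (mono_pos (v + (n.-1.+1)%:R) (ltr01 : (0:R) < 1))) => q.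
  by rewrite /lc_sub /lc_add /lc_opp /= psE /t; ring.
have cs : cover_sums X Lim.
  exists S; split=> //; split=> //; last by exists Lim.
  by move=> x Xx; exists 0%N; exact: Xin.
have := le_nn (hm Lim cs).
have dt : lc_pos (fun q => lc_sub m (itv_length I) q - t 1%N q).
  apply: (mono_small (w:=v)) => //.
  by rewrite ltrDl ltr01.
move=> h; apply: (pos0F _ (pos_nn_add dt h)); rewrite /Lim; pw7.
Qed.

End P7.

Theorem mainTheorem11 (R : realType) (I : lc_interval R) (X : set (rat -> R)) :
  is_interval I -> lc_dense_in X I ->
  (forall (S : nat -> lc_interval R) (L : rat -> R),
      is_cover X S -> lc_series_to (fun n => itv_length (S n)) L ->
      lc_le (itv_length I) L) /\
  outer_measurable X /\ outer_measure_is X (itv_length I).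
Proof.
move=> hI hX; split; first exact: part1.
have h := part2 hI hX; split=> //; by exists (itv_length I).
Qed.
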